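(* Let $K=[x_1,x_2]\times[y_1,y_2]\in T_h$, $h_x=x_2-x_1$, $h_y=y_2-y_1$. For $w,v\in U_h$, $$\int_{\partial K}n\cdot(A^c\nabla w)(\Pi_h^*v-v)\,ds=\frac{h_y^3h_x}{24}a^c_{11}v_{xy}w_{xy}+\frac{h_yh_x^3}{24}a^c_{22}v_{xy}w_{xy},$$ where $n$ is the outward unit normal of $K$, and $w_{xy},v_{xy}$ are the (constant) mixed derivatives of $w|_K$, $v|_K$.
   Context: $\Omega\subset\mathbb{R}^2$ is an open rectangle, $T_h$ a conforming partition of $\overline\Omega$ into closed rectangles with sides parallel to the axes, $N_h$ its set of nodes. $A=(a_{ij})_{2\times2}\in[W^{1,\infty}(\Omega)]^{2\times2}$, and $A^c=(a^c_{ij})$ is its piecewise constant approximation: $A^c|_K=\frac{1}{|K|}\int_KA$. The dual partition $T_h^*$ is obtained by connecting the center of each element to the midpoints of its edges; the control volume $K_P^*$ of a node $P$ is the union of the resulting sub-rectangles having $P$ as a vertex. $U_h=\{v\in C^0(\overline\Omega): v|_K\in Q_1(K)\ \forall K,\ v|_{\partial\Omega}=0\}$ ($Q_1$ = bilinear polynomials). $\Pi_h^*v=\sum_{P\in N_h}v(P)\chi_P$, $\chi_P$ the characteristic function of $K_P^*$. *)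

(* Defs.v *)
From Stdlib Require Import Reals.
From Coquelicot Require Import Coquelicot.
Open Scope R_scope.

Definition q1 (a b c d : R) (x y : R) : R := a + b * x + c * y + d * x * y.

Definition dx (f : R -> R -> R) (x y : R) : R := Derive (fun t => f t y) x.
Definition dy (f : R -> R -> R) (x y : R) : R := Derive (fun t => f x t) y.
Definition dxy (f : R -> R -> R) (x y : R) : R := Derive (fun t => dx f x t) y.

Definition avgK (x1 x2 y1 y2 : R) (a : R -> R -> R) : R :=
  RInt (fun x => RInt (fun y => a x y) y1 y2) x1 x2 / ((x2 - x1) * (y2 - y1)).

(* Restriction to K of Pi_h^* v: on K, the dual partition consists of the four
   quarter rectangles of K, and the quarter containing the vertex P carries the
   value v(P).  (On the dividing lines through the centre -- a null set for the
   boundary integral -- we arbitrarily assign the upper/right vertex.) *)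
Definition PiK (x1 x2 y1 y2 : R) (v : R -> R -> R) (x y : R) : R :=
  v (if Rlt_dec x ((x1 + x2) / 2) then x1 else x2)
    (if Rlt_dec y ((y1 + y2) / 2) then y1 else y2).

(* \int_{\partial K} n . F  phi ds for K = [x1,x2] x [y1,y2], F = (F1,F2),
   n the outward unit normal:  bottom (n = (0,-1)), top (n = (0,1)),
   left (n = (-1,0)), right (n = (1,0)). *)
Definition bdry_flux (x1 x2 y1 y2 : R) (F1 F2 phi : R -> R -> R) : R :=
    RInt (fun x => - F2 x y1 * phi x y1) x1 x2
  + RInt (fun x =>   F2 x y2 * phi x y2) x1 x2
  + RInt (fun y => - F1 x1 y * phi x1 y) y1 y2
  + RInt (fun y =>   F1 x2 y * phi x2 y) y1 y2.

(* Lipschitz continuity and boundedness on the open rectangle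
   Omega = (X1,X2) x (Y1,Y2): the characterization of W^{1,infty}(Omega)
   on a convex domain (up to choosing the Lipschitz representative). *)
Definition in_Omega (X1 X2 Y1 Y2 : R) (x y : R) : Prop :=
  X1 < x < X2 /\ Y1 < y < Y2.
Definition W1inf (X1 X2 Y1 Y2 : R) (a : R -> R -> R) : Prop :=
  exists M L : R,
    (forall x y, in_Omega X1 X2 Y1 Y2 x y -> Rabs (a x y) <= M) /\
    (forall x y x' y', in_Omega X1 X2 Y1 Y2 x y -> in_Omega X1 X2 Y1 Y2 x' y' ->
        Rabs (a x y - a x' y') <= L * sqrt ((x - x')^2 + (y - y')^2)).

(* Main.v *)
Require Import Defs.
From Stdlib Require Import Reals Lra.
From Coquelicot Require Import Coquelicot.
Open Scope R_scope.

Lemma RInt_quad (A B C a b : R) :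
  RInt (fun t => A + B*t + C*t^2) a b =
  (A*b + B*b^2/2 + C*b^3/3) - (A*a + B*a^2/2 + C*a^3/3).
Proof.
  apply is_RInt_unique.
  apply (is_RInt_derive (fun t => A*t + B*t^2/2 + C*t^3/3)).
  - intros x _. auto_derive. easy. simpl. field.
  - intros x _. apply (ex_derive_continuous (K:=R_AbsRing) (V:=R_NormedModule)). auto_derive. easy.
Qed.

Lemma ex_quad (A B C a b : R) : ex_RInt (fun t => A + B*t + C*t^2) a b.
Proof.
  apply (ex_RInt_continuous (V:=R_CompleteNormedModule)). intros z _. apply (ex_derive_continuous (K:=R_AbsRing) (V:=R_NormedModule)). auto_derive. easy.
Qed.

Lemma edge (a b p q k : R) (f : R -> R) : a < b ->
  (forall t, a < t < (a+b)/2 -> f t = (p + q*t) * (k*(a - t))) ->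
  (forall t, (a+b)/2 < t < b -> f t = (p + q*t) * (k*(b - t))) ->
  RInt f a b = q*k*(b-a)^3/24.
Proof.
  intros hab H1 H2.
  set (m := (a+b)/2).
  assert (E1 : forall t, Rmin a m < t < Rmax a m ->
     (p*k*a + (q*k*a - p*k)*t + (-(q*k))*t^2) = f t).
  { intros t Ht. rewrite Rmin_left in Ht by (unfold m; lra).
    rewrite Rmax_right in Ht by (unfold m; lra). rewrite H1 by exact Ht. ring. }
  assert (E2 : forall t, Rmin m b < t < Rmax m b ->
     (p*k*b + (q*k*b - p*k)*t + (-(q*k))*t^2) = f t).
  { intros t Ht. rewrite Rmin_left in Ht by (unfold m; lra).
    rewrite Rmax_right in Ht by (unfold m; lra). rewrite H2 by exact Ht. ring. }
  rewrite <- (RInt_Chasles f a m b).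
  2: exact (ex_RInt_ext _ _ _ _ E1 (ex_quad _ _ _ _ _)).
  2: exact (ex_RInt_ext _ _ _ _ E2 (ex_quad _ _ _ _ _)).
  rewrite <- (RInt_ext _ _ _ _ E1), <- (RInt_ext _ _ _ _ E2).
  rewrite !RInt_quad. unfold plus; simpl. unfold m. field.
Qed.

Lemma dx_q1 a b c d x y : dx (q1 a b c d) x y = b + d*y.
Proof. unfold dx, q1. apply is_derive_unique. auto_derive; [easy|ring]. Qed.
Lemma dy_q1 a b c d x y : dy (q1 a b c d) x y = c + d*x.
Proof. unfold dy, q1. apply is_derive_unique. auto_derive; [easy|ring]. Qed.
Lemma dxy_q1 a b c d x y : dxy (q1 a b c d) x y = d.
Proof. unfold dxy. rewrite (Derive_ext _ (fun t => b + d*t)) by (intro; apply dx_q1).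
 apply is_derive_unique. auto_derive; [easy|ring]. Qed.
Theorem lemma4p2
  (X1 X2 Y1 Y2 : R) (a11 a12 a21 a22 : R -> R -> R)
  (x1 x2 y1 y2 : R) (w v : R -> R -> R)
  (aw bw cw dw av bv cv dv : R) :
  X1 < X2 -> Y1 < Y2 ->
  W1inf X1 X2 Y1 Y2 a11 -> W1inf X1 X2 Y1 Y2 a12 ->
  W1inf X1 X2 Y1 Y2 a21 -> W1inf X1 X2 Y1 Y2 a22 ->
  X1 <= x1 -> x1 < x2 -> x2 <= X2 -> Y1 <= y1 -> y1 < y2 -> y2 <= Y2 ->
  (forall x y, x1 <= x <= x2 -> y1 <= y <= y2 -> w x y = q1 aw bw cw dw x y) ->
  (forall x y, x1 <= x <= x2 -> y1 <= y <= y2 -> v x y = q1 av bv cv dv x y) ->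
  let wK := q1 aw bw cw dw in
  let vK := q1 av bv cv dv in
  let c11 := avgK x1 x2 y1 y2 a11 in
  let c12 := avgK x1 x2 y1 y2 a12 in
  let c21 := avgK x1 x2 y1 y2 a21 in
  let c22 := avgK x1 x2 y1 y2 a22 in
  let hx := x2 - x1 in
  let hy := y2 - y1 in
  let xc := (x1 + x2) / 2 in
  let yc := (y1 + y2) / 2 in
  bdry_flux x1 x2 y1 y2
    (fun x y => c11 * dx wK x y + c12 * dy wK x y)
    (fun x y => c21 * dx wK x y + c22 * dy wK x y)
    (fun x y => PiK x1 x2 y1 y2 v x y - v x y)
  = hy ^ 3 * hx / 24 * c11 * dxy vK xc yc * dxy wK xc yc
  + hy * hx ^ 3 / 24 * c22 * dxy vK xc yc * dxy wK xc yc.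
  intros hX hY _ _ _ _ hx1 hx12 hx2 hy1 hy12 hy2 hw hv.
  cbv zeta.
  set (c11 := avgK x1 x2 y1 y2 a11).
  set (c12 := avgK x1 x2 y1 y2 a12).
  set (c21 := avgK x1 x2 y1 y2 a21).
  set (c22 := avgK x1 x2 y1 y2 a22).
  unfold bdry_flux.
  Ltac side hv := intros t Ht; unfold PiK;
    repeat match goal with |- context [Rlt_dec ?a ?b] => destruct (Rlt_dec a b) end;
    cbv beta iota; try lra;
    rewrite !hv by lra; rewrite ?dx_q1, ?dy_q1; unfold q1; ring.
  rewrite (edge x1 x2 (-(c21*(bw+dw*y1)+c22*cw)) (-(c22*dw)) (bv+dv*y1)) by (lra || side hv).
  rewrite (edge x1 x2 (c21*(bw+dw*y2)+c22*cw) (c22*dw) (bv+dv*y2)) by (lra || side hv).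
  rewrite (edge y1 y2 (-(c11*bw+c12*(cw+dw*x1))) (-(c11*dw)) (cv+dv*x1)) by (lra || side hv).
  rewrite (edge y1 y2 (c11*bw+c12*(cw+dw*x2)) (c11*dw) (cv+dv*x2)) by (lra || side hv).
  rewrite !dxy_q1. field.
Qed.
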